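(* Let $A$ be a real $2\times 2$ matrix and $B$ a real $1\times 2$ matrix, and let $\mathrm{NT}=\{\vec{x}\in\mathbb{R}^2 : BA^k\vec{x}>0 \text{ for all integers } k\ge 0\}$. Suppose $A$ has a positive eigenvalue and has an eigenvector $\vec{\alpha}$ with $B\vec{\alpha}=0$. If $\vec{\xi}\in\mathbb{R}^2$ satisfies $B\vec{\xi}>0$ and $BA\vec{\xi}>0$, then $\mathrm{NT}=\{\vec{x}\in\mathbb{R}^2: B\vec{x}>0\}$.
   Context: $\mathrm{NT}$ is the non-termination set of the loop ''while $(B\vec{x}>0)$ $\{\vec{x}:=A\vec{x}\}$''. *)

(* Defs.v *)
From HB Require Import structures.
From mathcomp Require Import all_boot all_order all_algebra.
Set Implicit Arguments. Unset Strict Implicit. Unset Printing Implicit Defensive.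
Import Order.TTheory GRing.Theory Num.Theory.
Local Open Scope ring_scope.

Definition appB (R : realFieldType) (B : 'M[R]_(1,2)) (x : 'cV[R]_2) : R :=
  (B *m x) 0 0.

Definition is_eigenvalue (R : realFieldType) (A : 'M[R]_2) (lam : R) : Prop :=
  exists v : 'cV[R]_2, v != 0 /\ A *m v = lam *: v.

Definition is_eigenvector (R : realFieldType) (A : 'M[R]_2) (v : 'cV[R]_2) : Prop :=
  v != 0 /\ exists mu : R, A *m v = mu *: v.

(* non-termination set of  while (Bx > 0) { x := A x } *)
Definition NT (R : realFieldType) (A : 'M[R]_2) (B : 'M[R]_(1,2)) (x : 'cV[R]_2) : Prop :=
  forall k : nat, 0 < appB B (A ^+ k *m x).

(* Main.v *)
Require Import Defs.
From HB Require Import structures.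
From mathcomp Require Import all_boot all_order all_algebra.
From mathcomp Require Import ring lra.
Import Order.TTheory GRing.Theory Num.Theory.
Local Open Scope ring_scope.

Lemma appBE (R : realFieldType) (B : 'M[R]_(1,2)) (x : 'cV[R]_2) :
  appB B x = B 0 0 * x 0 0 + B 0 1 * x 1 0.
Proof.
rewrite /appB mxE !big_ord_recr big_ord0 /= add0r.
by congr (B 0 _ * x _ 0 + B 0 _ * x _ 0); apply: val_inj.
Qed.

Lemma exists_c (R : realFieldType) (b d : 'M[R]_(1,2)) (a : 'cV[R]_2) :
  a != 0 -> b != 0 -> appB b a = 0 -> appB d a = 0 ->
  exists c : R, forall x, appB d x = c * appB b x.
Proof.
move=> anz bnz; rewrite !appBE => E1 E2.
have cross : d 0 1 * b 0 0 - d 0 0 * b 0 1 = 0.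
  have h1 : (d 0 1 * b 0 0 - d 0 0 * b 0 1) * a 1 0 =
     b 0 0 * (d 0 0 * a 0 0 + d 0 1 * a 1 0) - d 0 0 * (b 0 0 * a 0 0 + b 0 1 * a 1 0) by ring.
  have h0 : (d 0 1 * b 0 0 - d 0 0 * b 0 1) * a 0 0 =
     d 0 1 * (b 0 0 * a 0 0 + b 0 1 * a 1 0) - b 0 1 * (d 0 0 * a 0 0 + d 0 1 * a 1 0) by ring.
  rewrite E1 E2 !mulr0 subr0 in h0 h1.
  have [a1|a1] := eqVneq (a 1 0) 0.
    have [a0|a0] := eqVneq (a 0 0) 0.
      exfalso; move/eqP: anz; apply; apply/matrixP => i j.
      rewrite (ord1 j) mxE; case: i => [[|[|i]] Hi] //.
      - by rewrite -a0; congr (a _ _); apply: val_inj.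
      - by rewrite -a1; congr (a _ _); apply: val_inj.
    by move/eqP: h0; rewrite mulf_eq0 (negbTE a0) orbF => /eqP.
  by move/eqP: h1; rewrite mulf_eq0 (negbTE a1) orbF => /eqP.
have [b0|b0] := eqVneq (b 0 0) 0.
  have b1 : b 0 1 != 0.
    apply/eqP => b1; move/eqP: bnz; apply; apply/matrixP => i j.
    rewrite (ord1 i) mxE; case: j => [[|[|j]] Hj] //.
    - by rewrite -b0; congr (b _ _); apply: val_inj.
    - by rewrite -b1; congr (b _ _); apply: val_inj.
  have d0 : d 0 0 = 0.
    move: cross; rewrite b0 mulr0 sub0r => /eqP; rewrite oppr_eq0 mulf_eq0 (negbTE b1) orbF.
    by move/eqP.
  exists (d 0 1 / b 0 1) => x; rewrite !appBE b0 d0; field; exact: b1.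
have e : d 0 1 * b 0 0 = d 0 0 * b 0 1 by apply/eqP; rewrite -subr_eq0 cross.
exists (d 0 0 / b 0 0) => x; rewrite !appBE.
rewrite -[d 0 1](mulfK b0) e; field; exact: b0.
Qed.

Theorem lemma4 (R : realFieldType) (A : 'M[R]_2) (B : 'M[R]_(1,2)) :
  (exists lam : R, 0 < lam /\ is_eigenvalue A lam) ->
  (exists alpha : 'cV[R]_2, is_eigenvector A alpha /\ appB B alpha = 0) ->
  forall xi : 'cV[R]_2, 0 < appB B xi -> 0 < appB B (A *m xi) ->
  forall x : 'cV[R]_2, NT A B x <-> 0 < appB B x.
Proof.
move=> _ [a [[anz [mu Ha]] Ba]] xi Bxi BAxi.
have bnz : B != 0.
  apply/eqP => B0; move: Bxi; by rewrite /appB B0 mul0mx mxE ltxx.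
have BAa : appB (B *m A) a = 0.
  by rewrite /appB -mulmxA Ha -scalemxAr mxE -/(appB B a) Ba mulr0.
have [c Hc] := @exists_c R B (B *m A) a anz bnz Ba BAa.
have HcA : forall y, appB B (A *m y) = c * appB B y.
  by move=> y; rewrite -Hc /appB mulmxA.
have cpos : 0 < c.
  by move: BAxi; rewrite HcA pmulr_lgt0.
have Hk : forall k y, appB B (A ^+ k *m y) = c ^+ k * appB B y.
  elim=> [|k IH] y; first by rewrite expr0 mul1mx mul1r.
  by rewrite exprS -mulmxA HcA IH exprS mulrA.
move=> x; split.
  by move=> /(_ 0%N); rewrite Hk expr0 mul1r.
by move=> Bx k; rewrite Hk mulr_gt0 // exprn_gt0.
Qed.
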